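(* Let $(X_n)_{n\in\mathbb N}$ be a stationary process which is $\Theta,r$-multiple mixing with respect to $\mathcal G$, and let $p\in\mathbb N^*$ satisfy $\sum_{i=0}^\infty i^{p-1}\Theta(i)<\infty$. Then there is a constant $K_p<\infty$ such that $$I_n(p)\le K_p\sum_{i=1}^{\lceil p/2\rceil}n^{i-1}\|f(X_0)\|_r^i\|f\|_{\mathcal G}^i$$ for all $n\in\mathbb N^*$ and all $f\in\mathcal G$ with $\|f\|_\infty\le1$ and ${\rm E}f(X_0)=0$.
   Context: For integers $i_1,\dots,i_j$ write $i_j^*=i_1+\dots+i_j$. For fixed $f$ and $p\in\mathbb N^*$, $I_n(p)=\sum_{0\le i_1,\dots,i_p\le n-1,\ i_p^*\le n-1}\big|{\rm E}\big(f(X_0)f(X_{i_1^*})\cdots f(X_{i_p^*})\big)\big|$. $\mathcal G$ is a class of measurable real functions on $\mathbb R^d$ with a seminorm $\|\cdot\|_{\mathcal G}$; $\|\cdot\|_r$ is the $L^r$ norm. Multiple mixing: $(X_i)$ is $\Theta,r$-multiple mixing with respect to $\mathcal G$ if $r\in[1,\infty)$, $\Theta:\mathbb N\to\mathbb R_0^+$ is nonincreasing, and for every $p\in\mathbb N^*$ there is $K_p<\infty$ such that $\big|{\rm Cov}\big(f(X_0)f(X_{i_1^*})\cdots f(X_{i_{q-1}^*}),\,f(X_{i_q^*})\cdots f(X_{i_p^*})\big)\big|\le K_p\|f(X_0)\|_r\|f\|_{\mathcal G}\Theta(i_q)$ for all $f\in\mathcal G$ with $\|f\|_\infty\le1$ and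 ${\rm E}f(X_0)=0$, all $i_1,\dots,i_p\in\mathbb N$, $q\in\{1,\dots,p\}$. *)

(* Defs.v *)
From HB Require Import structures.
From mathcomp Require Import all_boot all_order all_algebra.
From mathcomp Require Import all_classical all_reals all_analysis.
Set Implicit Arguments. Unset Strict Implicit. Unset Printing Implicit Defensive.
Import Order.TTheory GRing.Theory Num.Theory.
Local Open Scope classical_set_scope.
Local Open Scope ring_scope.

Section defs.
Context {dT : measure_display} {T : measurableType dT} {R : realType}.
(* state space R^d, realised as d.-tuple R with the product (Borel) sigma-algebra *)
Context {d : nat}.
Local Notation S := (d.-tuple R).

Definition Ex (P : probability T R) (F : T -> R) : R := fine ('E_P[F])%E.

Definition Cov (P : probability T R) (F1 F2 : T -> R) : R :=
  fine (covariance P F1 F2).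

Definition Lrnorm (P : probability T R) (r : R) (F : T -> R) : R :=
  fine ('N[P]_(r%:E)[EFin \o F])%E.

Definition is_process (X : nat -> T -> S) : Prop :=
  forall n, measurable_fun [set: T] (X n).

(* strict stationarity: all finite-dimensional distributions are shift invariant
   (stated on measurable rectangles, which generate the product sigma-algebra) *)
Definition stationary (P : probability T R) (X : nat -> T -> S) : Prop :=
  forall (m k : nat) (t : 'I_m -> nat) (A : 'I_m -> set S),
    (forall j, measurable (A j)) ->
    P (\bigcap_(j in [set: 'I_m]) (X (t j) @^-1` A j)) =
    P (\bigcap_(j in [set: 'I_m]) (X (t j + k)%N @^-1` A j)).

(* partial sums: psum i j = i_1 + ... + i_j  (= i_j^* ), where i_(k+1) := i k *)
Definition psum (i : nat -> nat) (j : nat) : nat := (\sum_(k < j) i k)%N.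

Definition prodX (f : S -> R) (X : nat -> T -> S) (s : nat -> nat) (a b : nat)
  : T -> R := fun w => \prod_(a <= j < b) f (X (s j) w).

Definition multiple_mixing (P : probability T R) (X : nat -> T -> S)
  (G : set (S -> R)) (normG : (S -> R) -> R) (Theta : nat -> R) (r : R) : Prop :=
  [/\ 1 <= r,
      (forall n, 0 <= Theta n),
      (forall m n, (m <= n)%N -> Theta n <= Theta m) &
      forall p : nat, (0 < p)%N ->
        exists K : R, forall f : S -> R, G f -> (forall x, `|f x| <= 1) ->
          Ex P (f \o X 0%N) = 0 ->
          forall (i : nat -> nat) (q : nat), (1 <= q <= p)%N ->
            `|Cov P (prodX f X (psum i) 0 q) (prodX f X (psum i) q p.+1)|
              <= K * Lrnorm P r (f \o X 0%N) * normG f * Theta (i q.-1)].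

(* I_n(p) = sum over 0 <= i_1..i_p <= n-1 with i_p^* <= n-1 of
   |E(f(X_0) f(X_(i_1^* )) ... f(X_(i_p^* )))| ; here i_(k+1) := i k *)
Definition In_p (P : probability T R) (X : nat -> T -> S) (f : S -> R) (n p : nat) : R :=
  \sum_(i : {ffun 'I_p -> 'I_n} | (\sum_(k < p) (i k : nat) <= n.-1)%N)
     `|Ex P (prodX f X (fun j => \sum_(k < p | (k < j)%N) (i k : nat))%N 0 p.+1)|.

End defs.

(* Main.v *)
Require Import Defs.
From HB Require Import structures.
From mathcomp Require Import all_boot all_order all_algebra.
From mathcomp Require Import all_classical all_reals all_analysis.
From mathcomp Require Import ring lra zify.
Module Hm.
Import Order.TTheory GRing.Theory Num.Theory.
Local Open Scope classical_set_scope.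
Local Open Scope ring_scope.
Set Implicit Arguments. Unset Strict Implicit. Unset Printing Implicit Defensive.

Section ex.
Context {dT : measure_display} {T : measurableType dT} {R : realType} (P : probability T R).

Definition bmf (F : T -> R) := measurable_fun setT F /\ exists M : R, forall w, `|F w| <= M.

Lemma bmf_Lfun F : bmf F -> F \in Lfun P 1.
Proof.
move=> [mF [M hM]]; apply/Lfun1_integrable.
apply: measurable_bounded_integrable => //.
  apply: (le_lt_trans (probability_le1 P measurableT)); exact: ltry.
exists M; split; first exact: num_real.
by move=> y My x _ /=; apply: le_trans (hM x) (ltW My).
Qed.

Lemma Ex_fin F : bmf F -> ('E_P[F] \is a fin_num)%E.
Proof. by move/bmf_Lfun; exact: expectation_fin_num. Qed.

Lemma ExB F G : bmf F -> bmf G -> Ex P (F \- G) = Ex P F - Ex P G.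
Proof.
move=> hF hG; rewrite /Ex expectationB ?bmf_Lfun // fineB //; exact: Ex_fin.
Qed.

Lemma ExD F G : bmf F -> bmf G -> Ex P (F \+ G) = Ex P F + Ex P G.
Proof.
move=> hF hG; rewrite /Ex expectationD ?bmf_Lfun // fineD //; exact: Ex_fin.
Qed.

Lemma ExZ F k : bmf F -> Ex P (fun w => k * F w) = k * Ex P F.
Proof.
move=> hF; have -> : (fun w => k * F w) = k \o* F by apply/funext => w /=; rewrite mulrC.
by rewrite /Ex expectationZl ?bmf_Lfun //= fineM //; exact: Ex_fin.
Qed.

Lemma Ex_cst c : Ex P (cst c) = c.
Proof. by rewrite /Ex expectation_cst. Qed.

Lemma Ex_ge0 F : (forall w, 0 <= F w) -> 0 <= Ex P F.
Proof. by move=> h; rewrite /Ex fine_ge0 // expectation_ge0. Qed.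

Lemma Ex_indic A : measurable A -> Ex P (\1_A) = fine (P A).
Proof. by move=> mA; rewrite /Ex expectation_indic. Qed.


Lemma bmf_cst c : bmf (cst c).
Proof. by split; [exact: measurable_cst | exists `|c|]. Qed.

Lemma bmfB F G : bmf F -> bmf G -> bmf (F \- G).
Proof.
move=> [mF [M hM]] [mG [N hN]]; split; first exact: measurable_realfun.measurable_funB.
by exists (M + N) => w /=; rewrite (le_trans (ler_normB _ _)) // lerD.
Qed.

Lemma bmfD F G : bmf F -> bmf G -> bmf (F \+ G).
Proof.
move=> [mF [M hM]] [mG [N hN]]; split; first exact: measurable_realfun.measurable_funD.
by exists (M + N) => w /=; rewrite (le_trans (ler_normD _ _)) // lerD.
Qed.

Lemma bmfM F G : bmf F -> bmf G -> bmf (fun w => F w * G w).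
Proof.
move=> [mF [M hM]] [mG [N hN]]; split; first exact: measurable_realfun.measurable_funM.
exists (M * N) => w /=; rewrite normrM ler_pM //.
Qed.

Lemma bmfZ F k : bmf F -> bmf (fun w => k * F w).
Proof. by move=> hF; exact: bmfM (bmf_cst k) hF. Qed.

Lemma bmf_indic A : measurable A -> bmf (\1_A).
Proof.
move=> mA; split; first exact: measurable_realfun.measurable_indic.
by exists 1 => w; rewrite /indic; case: (w \in A); rewrite ?normr1 ?normr0.
Qed.

Lemma bmf_sum (I : Type) (s : seq I) (F : I -> T -> R) :
  (forall i, bmf (F i)) -> bmf (fun w => \sum_(i <- s) F i w).
Proof.
move=> h; elim: s => [|x s IH].
  by under eq_fun do rewrite big_nil; exact: bmf_cst.
by under eq_fun do rewrite big_cons; exact: (bmfD (h x) IH).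
Qed.

Lemma bmf_prod (I : Type) (s : seq I) (F : I -> T -> R) :
  (forall i, bmf (F i)) -> bmf (fun w => \prod_(i <- s) F i w).
Proof.
move=> h; elim: s => [|x s IH].
  by under eq_fun do rewrite big_nil; exact: bmf_cst.
by under eq_fun do rewrite big_cons; exact: (bmfM (h x) IH).
Qed.

Lemma Ex_sum (I : Type) (s : seq I) (F : I -> T -> R) :
  (forall i, bmf (F i)) -> Ex P (fun w => \sum_(i <- s) F i w) = \sum_(i <- s) Ex P (F i).
Proof.
move=> h; elim: s => [|x s IH].
  by under eq_fun do rewrite big_nil; rewrite big_nil Ex_cst.
under eq_fun do rewrite big_cons; rewrite big_cons -IH.
exact: (ExD (h x) (bmf_sum s h)).
Qed.

Lemma Ex_abs_le F c : bmf F -> (forall w, `|F w| <= c) -> `|Ex P F| <= c.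
Proof.
move=> hF hc; rewrite ler_norml; apply/andP; split.
- have := Ex_ge0 (F := cst c \+ F) (fun w => _).
  rewrite ExD ?Ex_cst //; last exact: bmf_cst.
  rewrite -lerBlDl sub0r; apply => w /=.
  by rewrite -lerBlDl sub0r; have := hc w; rewrite ler_norml => /andP[].
- have := Ex_ge0 (F := cst c \- F) (fun w => _).
  rewrite ExB ?Ex_cst //; last exact: bmf_cst.
  rewrite subr_ge0; apply => w /=.
  by rewrite subr_ge0; have := hc w; rewrite ler_norml => /andP[].
Qed.

Lemma CovE A B : bmf A -> bmf B ->
  Cov P A B = Ex P (fun w => A w * B w) - Ex P A * Ex P B.
Proof.
move=> hA hB; rewrite /Cov covarianceE ?bmf_Lfun //; last exact: bmfM.
rewrite fineB ?fin_numM ?Ex_fin //; last exact: bmfM.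
by rewrite fineM ?Ex_fin.
Qed.

End ex.

End Hm.
Import Hm.

Module Sm.
Import Order.TTheory GRing.Theory Num.Theory.
Import archimedean.Num.Theory archimedean.Num.Def.
Local Open Scope classical_set_scope.
Local Open Scope ring_scope.
Set Implicit Arguments. Unset Strict Implicit. Unset Printing Implicit Defensive.

Section prodaux.
Context {R : realType}.

Lemma prod_le1 (r : seq nat) (a : nat -> R) :
  (forall j, `|a j| <= 1) -> `|\prod_(j <- r) a j| <= 1.
Proof.
move=> h; elim: r => [|x r IH]; first by rewrite big_nil normr1.
rewrite big_cons normrM -[leRHS](mulr1 1); exact: ler_pM.
Qed.

Lemma prod_diff (r : seq nat) (a b : nat -> R) :
  (forall j, `|a j| <= 1) -> (forall j, `|b j| <= 1) ->
  `|\prod_(j <- r) a j - \prod_(j <- r) b j| <= \sum_(j <- r) `|a j - b j|.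
Proof.
move=> ha hb; elim: r => [|x r IH]; first by rewrite !big_nil subrr normr0.
rewrite !big_cons.
have -> : a x * \prod_(j <- r) a j - b x * \prod_(j <- r) b j =
  a x * (\prod_(j <- r) a j - \prod_(j <- r) b j) + (a x - b x) * \prod_(j <- r) b j.
  by rewrite mulrBr mulrBl addrA subrK.
rewrite (le_trans (ler_normD _ _)) // addrC lerD //.
  rewrite normrM -[leRHS]mulr1; apply: ler_pM => //; exact: prod_le1.
rewrite normrM -[leRHS]mul1r; apply: ler_pM => //; exact: prod_le1.
Qed.

Lemma small_eq0 (x c : R) : 0 <= c -> (forall N : nat, `|x| <= c / N.+1%:R) -> x = 0.
Proof.
move=> c0 h; apply/eqP; apply/negPn/negP => x0.
have ax : 0 < `|x| by rewrite normr_gt0.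
have := h (truncn (c / `|x|)).
have lt1 : c / `|x| < (truncn (c / `|x|)).+1%:R by apply: truncnS_gt.
rewrite ler_pdivlMr // => H.
have : `|x| * (truncn (c / `|x|)).+1%:R > c.
  by rewrite mulrC -ltr_pdivrMr.
by rewrite ltNge H.
Qed.

End prodaux.

Section stat.
Context {dT : measure_display} {T : measurableType dT} {R : realType} (P : probability T R).
Context {d : nat} (X : nat -> T -> d.-tuple R).
Hypothesis (hX : is_process X) (hS : stationary P X).
Variable g : d.-tuple R -> R.
Hypothesis (mg : measurable_fun setT g) (g1 : forall y, `|g y| <= 1).

Lemma bmf_prodg m (u : nat -> nat) (gg : d.-tuple R -> R) :
  measurable_fun setT gg -> (forall y, `|gg y| <= 1) ->
  bmf (fun w => \prod_(0 <= j < m) gg (X (u j) w)).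
Proof.
move=> mgg gg1; apply: (@bmf_prod _ _ _ _ _ (fun j w => gg (X (u j) w))) => j.
split; first exact: measurableT_comp (hX _).
by exists 1.
Qed.


Lemma prod_indic m (A : 'I_m -> set T) w :
  \prod_(j < m) (\1_(A j) w : R) = \1_(\bigcap_(j in [set: 'I_m]) A j) w.
Proof.
have [allin|notall] := pselect (forall j, A j w).
  rewrite big1 ?indicE ?mem_set // => j _; rewrite indicE mem_set //.
have [j nj] : exists j, ~ A j w.
  by apply/existsNP.
rewrite (bigD1 j) //= !indicE memNset // mul0r memNset //.
by move=> h; apply: nj; apply: h.
Qed.

Lemma measurable_bigcapI m (A : 'I_m -> set T) :
  (forall j, measurable (A j)) -> measurable (\bigcap_(j in [set: 'I_m]) A j).
Proof.
move=> mA.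
have -> : [set: 'I_m] = [set` enum 'I_m] by apply/seteqP; split => j //= _; rewrite mem_enum.
rewrite bigcap_seq; exact: bigsetI_measurable.
Qed.

Section disc.
Variable N : nat.
Let NN : R := N.+1%:R.
Let h (y : d.-tuple R) : R := (g y + 1) * NN.
Let M := (2 * N.+1).+1.
Let v (l : nat) : R := l%:R / NN - 1.
Let B (l : nat) : set (d.-tuple R) := h @^-1` `[l%:R, l.+1%:R[.
Let gN y : R := \sum_(l < M) v l * \1_(B l) y.

Let NN0 : 0 < NN. Proof. by rewrite /NN ltr0n. Qed.

Let gb y : -1 <= g y <= 1.
Proof. by rewrite -ler_norml. Qed.

Let h0 y : 0 <= h y.
Proof.
rewrite /h; apply: mulr_ge0; [have /andP[H1 H2] := gb y; lra | exact: ltW].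
Qed.

Let mh : measurable_fun setT h.
Proof.
apply: measurable_realfun.measurable_funM; last exact: measurable_cst.
apply: measurable_realfun.measurable_funD => //; exact: measurable_cst.
Qed.

Let mB l : measurable (B l).
Proof. by rewrite -[B l]setTI; apply: mh => //; exact: measurable_itv. Qed.

Let gN_eq y : gN y = v (truncn (h y)).
Proof.
have trM : (truncn (h y) < M)%N.
  rewrite /M ltnS truncn_le_nat /h.
  have /andP[_ gy1] := gb y.
  rewrite -addn1 natrD natrM -/NN.
  have H0 := NN0; nra.
rewrite /gN (bigD1 (Ordinal trM)) //= big1 ?addr0.
  rewrite indicE mem_set ?mulr1 // /B /= in_itv /=.
  exact: truncn_itv.
move=> l /eqP nl; rewrite indicE memNset ?mulr0 // /B /= in_itv /= => H.
apply: nl; apply/val_inj => /=; apply/esym/eqP; rewrite truncn_eq //.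
Qed.

Let tr_itv y : (truncn (h y))%:R <= h y < (truncn (h y)).+1%:R.
Proof. exact: truncn_itv. Qed.

Lemma gN_close y : `|g y - gN y| <= NN^-1.
Proof.
rewrite gN_eq; set t := truncn (h y); have /andP[t1 t2] := tr_itv y; rewrite -/t in t1 t2.
have -> : g y - v t = (h y - t%:R) / NN.
  by rewrite /h /v; field; rewrite gt_eqF.
rewrite normrM ger0_norm ?subr_ge0 // ger0_norm ?invr_ge0 ?(ltW NN0) //.
apply: ltW; rewrite -[X in _ < X]mul1r ltr_pM2r ?invr_gt0 //.
rewrite -addn1 natrD in t2; lra.
Qed.

Lemma gN1 y : `|gN y| <= 1.
Proof.
rewrite gN_eq; set t := truncn (h y); have /andP[t1 t2] := tr_itv y; rewrite -/t in t1 t2.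
have /andP[H1 H2] := gb y.
rewrite ler_norml /v; apply/andP; split.
  by rewrite lerBrDr addNr divr_ge0 // ltW.
rewrite lerBlDr ler_pdivrMr //.
have : h y <= 2 * NN by rewrite /h; have := NN0; nra.
lra.
Qed.

Lemma mgN : measurable_fun setT gN.
Proof.
rewrite /gN; apply: measurable_sum => l.
apply: measurable_realfun.measurable_funM; first exact: measurable_cst.
exact: measurable_realfun.measurable_indic.
Qed.

Lemma prod_gN_expand m (u : nat -> nat) w :
  \prod_(0 <= j < m) gN (X (u j) w) =
  \sum_(phi : {ffun 'I_m -> 'I_M}) (\prod_(j < m) v (phi j)) *
     \1_(\bigcap_(j in [set: 'I_m]) (X (u j) @^-1` B (phi j))) w.
Proof.
rewrite big_mkord /gN bigA_distr_bigA; apply: eq_bigr => phi _.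
rewrite big_split /= -prod_indic; by congr (_ * _).
Qed.

Lemma Ex_prod_gN m (u : nat -> nat) :
  Ex P (fun w => \prod_(0 <= j < m) gN (X (u j) w)) =
  \sum_(phi : {ffun 'I_m -> 'I_M}) (\prod_(j < m) v (phi j)) *
     fine (P (\bigcap_(j in [set: 'I_m]) (X (u j) @^-1` B (phi j)))).
Proof.
have mC (phi : {ffun 'I_m -> 'I_M}) : measurable (\bigcap_(j in [set: 'I_m]) (X (u j) @^-1` B (phi j))).
  apply: measurable_bigcapI => j; rewrite -[_ @^-1` _]setTI; exact: (hX _).
under eq_fun do rewrite prod_gN_expand.
rewrite (@Ex_sum _ _ _ P {ffun 'I_m -> 'I_M} (index_enum _) (fun (phi : {ffun 'I_m -> 'I_M}) w => (\prod_(j < m) v (phi j)) *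
     \1_(\bigcap_(j in [set: 'I_m]) (X (u j) @^-1` B (phi j))) w)); last first.
  move=> phi; apply: bmfZ; apply: bmf_indic; exact: mC.
apply: eq_bigr => phi _.
rewrite ExZ; last exact: bmf_indic.
by rewrite Ex_indic.
Qed.

Lemma Ex_gN_shift m (t : nat -> nat) k :
  Ex P (fun w => \prod_(0 <= j < m) gN (X (t j + k)%N w)) =
  Ex P (fun w => \prod_(0 <= j < m) gN (X (t j) w)).
Proof.
rewrite !Ex_prod_gN; apply: eq_bigr => phi _; congr (_ * fine _).
by rewrite -(@hS m k (fun j => t j) (fun j => B (phi j))).
Qed.

Lemma approx_gN m (u : nat -> nat) :
  `|Ex P (fun w => \prod_(0 <= j < m) g (X (u j) w)) -
    Ex P (fun w => \prod_(0 <= j < m) gN (X (u j) w))| <= m%:R / NN.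
Proof.
have b1 := bmf_prodg m u mg g1.
have b2 := bmf_prodg m u mgN gN1.
rewrite -ExB //; apply: Ex_abs_le; first exact: bmfB.
move=> w /=; apply: le_trans (prod_diff _ _ _) _.
- by move=> j; exact: g1.
- by move=> j; exact: gN1.
apply: le_trans (ler_sum _ (fun j _ => gN_close (X (u j) w))) _.
by rewrite sumr_const_nat subn0 mulr_natl.
Qed.

Lemma stat_bound m (t : nat -> nat) k :
  `|Ex P (fun w => \prod_(0 <= j < m) g (X (t j + k)%N w)) -
    Ex P (fun w => \prod_(0 <= j < m) g (X (t j) w))| <= (2 * m)%:R / N.+1%:R.
Proof.
set a := Ex P _; set b := Ex P (fun w => \prod_(0 <= j < m) g (X (t j) w)).
have h1 := approx_gN m (fun j => t j + k)%N.
have h2 := approx_gN m t.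
rewrite Ex_gN_shift in h1.
set c := Ex P (fun w => \prod_(0 <= j < m) gN (X (t j) w)) in h1 h2.
have -> : a - b = (a - c) - (b - c) by rewrite opprB addrA subrK.
apply: le_trans (ler_normB _ _) _.
rewrite (_ : (2 * m)%:R / N.+1%:R = m%:R / NN + m%:R / NN); first exact: lerD.
by rewrite /NN natrM -mulrA mulr_natl mulr2n.
Qed.

End disc.

Lemma stat_Ex m (t : nat -> nat) k :
  Ex P (fun w => \prod_(0 <= j < m) g (X (t j + k)%N w)) =
  Ex P (fun w => \prod_(0 <= j < m) g (X (t j) w)).
Proof.
apply/eqP; rewrite -subr_eq0; apply/eqP.
apply: (small_eq0 (c := (2 * m)%N%:R)) => // N; exact: stat_bound.
Qed.

End stat.

End Sm.
Import Sm.

Module Cm.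
Import Order.TTheory GRing.Theory Num.Theory.
Local Open Scope ring_scope.
Set Implicit Arguments. Unset Strict Implicit. Unset Printing Implicit Defensive.

Fixpoint tups (n p : nat) : seq (seq nat) :=
  if p is p'.+1 then [seq x :: s | x <- iota 0 n, s <- tups n p'] else [:: [::]].

Lemma mem_tups n p s : (s \in tups n p) = (size s == p) && all (fun x => x < n)%N s.
Proof.
elim: p s => [|p IH] s /=.
  by rewrite inE; case: s.
apply/allpairsP/idP.
  move=> [[x t] /= [xi tt ->]] /=; rewrite eqSS.
  by move: xi tt; rewrite mem_iota add0n IH => /andP[_ xn] /andP[-> ->]; rewrite xn.
case: s => [//|x t] /=; rewrite eqSS => /and3P[st xn at_].
by exists (x, t) => //=; rewrite mem_iota add0n xn IH st.
Qed.

Lemma uniq_tups n p : uniq (tups n p).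
Proof.
elim: p => [//|p IH] /=; apply: allpairs_uniq => //; first exact: iota_uniq.
by move=> [x s] [y t] _ _ /= [-> ->].
Qed.

Section sums.
Context {R : realType}.

Lemma big_tups_S n p (F : seq nat -> R) :
  \sum_(s <- tups n p.+1) F s = \sum_(0 <= x < n) \sum_(s <- tups n p) F (x :: s).
Proof. by rewrite /= big_allpairs_dep /index_iota subn0. Qed.

Lemma big_tups0 n (F : seq nat -> R) : \sum_(s <- tups n 0) F s = F [::].
Proof. by rewrite /= big_seq1. Qed.

Lemma big_tups_split n a b (F G : seq nat -> R) :
  \sum_(s <- tups n (a + b)) F (take a s) * G (drop a s) =
  (\sum_(u <- tups n a) F u) * (\sum_(v <- tups n b) G v).
Proof.
elim: a F => [|a IH] F.
  rewrite add0n big_tups0 big_distrr /=; apply: eq_bigr => s _.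
  by rewrite take0 drop0.
rewrite addSn big_tups_S big_tups_S big_distrl /=; apply: eq_bigr => x _.
by rewrite -(IH (fun u => F (x :: u))).
Qed.

Lemma big_tups1 n c : \sum_(s <- tups n 1) (c : R) = n%:R * c.
Proof.
rewrite big_tups_S; under eq_bigr do rewrite big_tups0.
by rewrite sumr_const_nat subn0 mulr_natl.
Qed.


Lemma sum_le_count n y : \sum_(0 <= x < n) ((x < y)%N%:R : R) <= n%:R.
Proof.
have -> : n%:R = \sum_(0 <= x < n) (1 : R) by rewrite sumr_const_nat subn0.
apply: ler_sum => x _; by case: (x < y)%N.
Qed.

Lemma count_lt n y : \sum_(0 <= x < n) ((x < y)%N%:R : R) <= y%:R.
Proof.
elim: n => [|n IH]; first by rewrite big_geq.
rewrite big_nat_recr //=; case: (ltnP n y) => ny.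
  apply: le_trans (lerD (sum_le_count n y) (lexx _)) _.
  by rewrite -natrD ler_nat addn1.
by rewrite addr0.
Qed.

Definition maxs (s : seq nat) : nat := foldr maxn 0%N s.

Lemma maxs_cons x s : maxs (x :: s) = maxn x (maxs s). Proof. by []. Qed.

Lemma maxs_mem s : s != [::] -> maxs s \in s.
Proof.
elim: s => [//|x s IH] _; rewrite /= inE.
case: (eqVneq s [::]) => [->|sn]; first by rewrite /= maxn0 eqxx.
have := IH sn; rewrite /maxn; case: ifP => _ H; [by rewrite H orbT | by rewrite eqxx].
Qed.

Lemma count_max n p x : \sum_(s <- tups n p) ((maxs s <= x)%N%:R : R) <= x.+1%:R ^+ p.
Proof.
elim: p => [|p IH]; first by rewrite big_tups0 expr0.
rewrite big_tups_S exprS.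
under eq_bigr do under eq_bigr do rewrite maxs_cons geq_max -mulnb natrM.
under eq_bigr do rewrite -big_distrr /=.
apply: le_trans (ler_sum _ (fun y _ => ler_wpM2l (ler0n _ _) IH)) _.
rewrite -big_distrl /= ler_wpM2r ?exprn_ge0 //.
exact: (count_lt n x.+1).
Qed.

Lemma theta_sum n p (h : nat -> R) : (forall m, 0 <= h m) ->
  \sum_(s <- tups n p.+1) h (maxs s) <= p.+1%:R * \sum_(0 <= m < n) h m * m.+1%:R ^+ p.
Proof.
elim: p h => [|p IH] h h0.
  rewrite big_tups_S mul1r; under eq_bigr do rewrite big_tups0 /= maxn0.
  by under [X in _ <= X]eq_bigr do rewrite expr0 mulr1.
rewrite big_tups_S.
have step x s : h (maxs (x :: s)) <= h x * (maxs s <= x)%N%:R + h (maxs s) * (x < maxs s)%N%:R.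
  rewrite maxs_cons /maxn; case: ltnP => H /=; by rewrite ?mulr0 ?mulr1 ?add0r ?addr0.
apply: le_trans (ler_sum _ (fun x _ => ler_sum _ (fun s _ => step x s))) _.
under eq_bigr do rewrite big_split /=.
rewrite big_split /=.
have A : \sum_(0 <= i < n) \sum_(i0 <- tups n p.+1) h i * (maxs i0 <= i)%N%:R <=
         \sum_(0 <= m < n) h m * m.+1%:R ^+ p.+1.
  apply: ler_sum => x _; rewrite -big_distrr /=.
  apply: ler_wpM2l; [exact: h0 | exact: (count_max n p.+1 x)].
have B : \sum_(0 <= i < n) \sum_(i0 <- tups n p.+1) h (maxs i0) * (i < maxs i0)%N%:R <=
         p.+1%:R * \sum_(0 <= m < n) h m * m.+1%:R ^+ p.+1.
  rewrite exchange_big /=.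
  under eq_bigr do rewrite -big_distrr /=.
  apply: le_trans (ler_sum _ (fun s _ => ler_wpM2l (h0 _) (count_lt n (maxs s)))) _.
  apply: le_trans (IH (fun m => h m * m%:R) _) _.
    by move=> m; rewrite mulr_ge0.
  rewrite ler_wpM2l // ; apply: ler_sum => m _.
  rewrite exprS -mulrA; apply: ler_wpM2l; first exact: h0.
  by apply: ler_wpM2r; [rewrite exprn_ge0 | rewrite ler_nat].
apply: le_trans (lerD A B) _.
by rewrite -[p.+2]addn1 natrD mulrDl mul1r addrC.
Qed.

End sums.

Lemma sumn_take_big (s : seq nat) j :
  sumn (take j s) = (\sum_(0 <= k < size s | k < j) nth 0 s k)%N.
Proof.
elim: s j => [|x s IH] [|j] /=.
- by rewrite big_geq.
- by rewrite big_geq.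
- by rewrite big_pred0.
rewrite big_ltn_cond //= big_add1 /= IH; congr (_ + _)%N.
Qed.

Section ffun_tups.
Variables (p n : nat).

Definition seq_of (i : {ffun 'I_p -> 'I_n}) : seq nat := [seq (i k : nat) | k <- enum 'I_p].

Lemma size_seq_of i : size (seq_of i) = p.
Proof. by rewrite size_map size_enum_ord. Qed.

Lemma nth_seq_of i (k : 'I_p) : nth 0%N (seq_of i) k = i k.
Proof.
by rewrite (nth_map k) ?size_enum_ord // nth_ord_enum.
Qed.

Lemma seq_of_inj : injective seq_of.
Proof.
move=> i i' E; apply/ffunP => k; apply/val_inj => /=.
by rewrite -!nth_seq_of E.
Qed.

Lemma sum_take_seq_of (i : {ffun 'I_p -> 'I_n}) j :
  (\sum_(k < p | (k < j)%N) (i k : nat))%N = sumn (take j (seq_of i)).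
Proof.
rewrite sumn_take_big size_seq_of big_mkord; apply: eq_bigr => k _.
by rewrite nth_seq_of.
Qed.

Lemma seq_of_tups :
  perm_eq [seq seq_of i | i <- enum {ffun 'I_p -> 'I_n}] (tups n p).
Proof.
apply: uniq_perm.
- rewrite map_inj_uniq ?enum_uniq //; exact: seq_of_inj.
- exact: uniq_tups.
move=> s; rewrite mem_tups; apply/mapP/idP.
  move=> [i _ ->]; rewrite size_seq_of eqxx /=; apply/allP => x /mapP[k _ ->].
  exact: ltn_ord.
move=> /andP[/eqP sp /allP sn].
have H (k : 'I_p) : (nth 0%N s k < n)%N.
  by apply: sn; apply: mem_nth; rewrite sp.
exists [ffun k => Ordinal (H k)]; first by rewrite mem_enum.
apply: (@eq_from_nth _ 0%N); first by rewrite size_seq_of sp.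
move=> k; rewrite sp => kp.
by rewrite (nth_seq_of _ (Ordinal kp)) ffunE.
Qed.

Lemma sum_ffun_tups {R : realType} (F : seq nat -> R) :
  \sum_(i : {ffun 'I_p -> 'I_n}) F (seq_of i) = \sum_(s <- tups n p) F s.
Proof.
rewrite -(perm_big _ seq_of_tups) big_map big_enum //.
Qed.

End ffun_tups.

Section Rsum.
Context {R : realType}.
Variables (n : nat) (L N : R).
Hypotheses (L0 : 0 <= L) (N0 : 0 <= N).

Definition Tm (i : nat) : R := n%:R ^+ i.-1 * L ^+ i * N ^+ i.
Definition Rs (Q : nat) : R := \sum_(1 <= i < (uphalf Q).+1) Tm i.

Lemma Tm_ge0 i : 0 <= Tm i.
Proof. by rewrite /Tm !mulr_ge0 // exprn_ge0. Qed.

Lemma Rs_ge0 Q : 0 <= Rs Q.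
Proof. by apply: sumr_ge0 => i _; exact: Tm_ge0. Qed.

Lemma term_le_sum (F : nat -> R) a b k : (forall i, 0 <= F i) -> (a <= k < b)%N ->
  F k <= \sum_(a <= i < b) F i.
Proof.
move=> F0 /andP[ak kb].
rewrite (big_cat_nat _ (n := k)) //=; last exact: ltnW.
rewrite [X in _ + X]big_ltn //= addrCA lerDl addr_ge0 //; by apply: sumr_ge0.
Qed.

Lemma Tm_le_Rs k Q : (1 <= k <= uphalf Q)%N -> Tm k <= Rs Q.
Proof. by move=> hk; apply: term_le_sum => //; exact: Tm_ge0. Qed.

Lemma uphalf_add a b : (uphalf a + uphalf b <= uphalf (a + b).+1)%N.
Proof. rewrite !uphalfE -!divn2; lia. Qed.

Lemma uphalf_le2 a b : (uphalf a <= (a + b).+1)%N /\ (uphalf b <= (a + b).+1)%N.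
Proof. rewrite !uphalfE -!divn2; lia. Qed.

Lemma LN_le_Rs Q : (0 < Q)%N -> L * N <= Rs Q.
Proof.
move=> Q0; have : Tm 1 <= Rs Q.
  apply: Tm_le_Rs; rewrite leqnn /=.
  by case: Q Q0.
by rewrite /Tm expr0 mul1r !expr1.
Qed.

Lemma Rs_prod a b : n%:R * Rs a * Rs b <= ((a + b).+1 ^ 2)%:R * Rs (a + b).+1.
Proof.
rewrite /Rs.
have H : forall i, (1 <= i < (uphalf a).+1)%N -> forall j, (1 <= j < (uphalf b).+1)%N ->
    n%:R * Tm i * Tm j <= Rs (a + b).+1.
  move=> i /andP[i1 ia] j /andP[j1 jb].
  have -> : n%:R * Tm i * Tm j = Tm (i + j).
    rewrite /Tm; case: i i1 ia => // i _ _; case: j j1 jb => // j _ _.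
    rewrite addSn addnS /= !exprS !exprD; ring.
  apply: Tm_le_Rs; apply/andP; split; first by rewrite addn_gt0 i1.
  apply: leq_trans (uphalf_add a b); apply: leq_add; by rewrite -ltnS.
rewrite [n%:R * _]mulr_sumr big_distrlr /=.
apply: (@le_trans _ _ (\sum_(1 <= i < (uphalf a).+1) \sum_(1 <= j < (uphalf b).+1) Rs (a + b).+1)).
  rewrite big_seq_cond [X in _ <= X]big_seq_cond; apply: ler_sum => i /andP[+ _].
  rewrite mem_index_iota => hi; rewrite big_seq_cond [X in _ <= X]big_seq_cond.
  apply: ler_sum => j /andP[+ _]; rewrite mem_index_iota => hj.
  by apply: H.
rewrite sumr_const_nat sumr_const_nat -mulrnA.
set K1 := (_ * _)%N.
rewrite -(mulr_natr (Rs _) K1) mulrC.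
apply: ler_wpM2r; first exact: Rs_ge0.
rewrite ler_nat /K1 !subn1 /= expnS expn1 mulnC.
by have [h1 h2] := uphalf_le2 a b; apply: leq_mul.
Qed.

End Rsum.

End Cm.
Import Cm.

Module Mm.
Import Order.TTheory GRing.Theory Num.Theory.
Local Open Scope classical_set_scope.
Local Open Scope ring_scope.
Set Implicit Arguments. Unset Strict Implicit. Unset Printing Implicit Defensive.

Definition pos (s : seq nat) (j : nat) : nat := sumn (take j s).

Lemma psum_pos s j : psum (nth 0%N s) j = pos s j.
Proof.
rewrite /psum /pos; elim: j => [|j IH]; first by rewrite big_ord0 take0.
rewrite big_ord_recr /= IH; case: (ltnP j (size s)) => js.
  by rewrite (take_nth 0%N js) sumn_rcons.
by rewrite !take_oversize ?(leq_trans js) // nth_default // addn0.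
Qed.

Section main.
Context {dT : measure_display} {T : measurableType dT} {R : realType} (P : probability T R).
Context {d : nat} (X : nat -> T -> d.-tuple R).
Hypothesis (hX : is_process X) (hS : stationary P X).
Variable f : d.-tuple R -> R.
Hypothesis (mf : measurable_fun setT f) (f1 : forall y, `|f y| <= 1).

Definition Ef (s : seq nat) : R := `|Ex P (prodX f X (pos s) 0 (size s).+1)|.

Lemma Ef_ge0 s : 0 <= Ef s. Proof. exact: normr_ge0. Qed.

Lemma prodX_ext (sg sg' : nat -> nat) a b :
  (forall j, (a <= j < b)%N -> sg j = sg' j) -> prodX f X sg a b = prodX f X sg' a b.
Proof.
move=> h; apply/funext => w; rewrite /prodX; apply: eq_big_nat => j jr.
by rewrite h.
Qed.

Lemma bmf_prodX sg a b : bmf (prodX f X sg a b).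
Proof.
apply: (@bmf_prod _ _ _ _ _ (fun j w => f (X (sg j) w))) => j.
by split; [exact: measurableT_comp (hX _) | exists 1].
Qed.

Lemma Ef_split (c : R) s q : (q < size s)%N ->
  `|Cov P (prodX f X (psum (nth 0%N s)) 0 q.+1)
          (prodX f X (psum (nth 0%N s)) q.+1 (size s).+1)| <= c ->
  Ef s <= c + Ef (take q s) * Ef (drop q.+1 s).
Proof.
move=> qs hc.
have ps := psum_pos s.
have eA : prodX f X (psum (nth 0%N s)) 0 q.+1 = prodX f X (pos (take q s)) 0 (size (take q s)).+1.
  rewrite (size_takel (ltnW qs)); apply: prodX_ext => j /andP[_ jq].
  by rewrite ps /pos take_takel.
have eB : Ex P (prodX f X (psum (nth 0%N s)) q.+1 (size s).+1) =
          Ex P (prodX f X (pos (drop q.+1 s)) 0 (size (drop q.+1 s)).+1).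
  rewrite (prodX_ext (sg' := pos s)); last by move=> j _; rewrite ps.
  rewrite /prodX.
  under eq_fun do rewrite -{1}(add0n q.+1) big_addn.
  rewrite size_drop subnSK // subSS.
  have E j : pos s (j + q.+1) = (pos (drop q.+1 s) j + pos s q.+1)%N.
    by rewrite /pos addnC takeD sumn_cat addnC.
  under eq_fun do under eq_big_nat => j _ do rewrite E.
  exact: (stat_Ex hX hS mf f1 (size s - q) (pos (drop q.+1 s)) (pos s q.+1)).
have eAB : prodX f X (pos s) 0 (size s).+1 =
  (fun w => prodX f X (psum (nth 0%N s)) 0 q.+1 w * prodX f X (psum (nth 0%N s)) q.+1 (size s).+1 w).
  apply/funext => w; rewrite /prodX (big_cat_nat _ (n := q.+1)) //=; last by rewrite ltnS (ltnW qs).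
  by congr (_ * _); apply: eq_bigr => j _; rewrite ps.
rewrite /Ef eAB.
have := CovE P (bmf_prodX (psum (nth 0%N s)) 0 q.+1) (bmf_prodX (psum (nth 0%N s)) q.+1 (size s).+1).
move=> /(congr1 (fun x => x + Ex P (prodX f X (psum (nth 0%N s)) 0 q.+1) *
   Ex P (prodX f X (psum (nth 0%N s)) q.+1 (size s).+1))); rewrite subrK => <-.
rewrite (le_trans (ler_normD _ _)) // lerD // normrM eA eB //.
Qed.


Definition Isum n k := \sum_(s <- tups n k) Ef s.

Lemma Isum_ge0 n k : 0 <= Isum n k.
Proof. by apply: sumr_ge0 => s _; exact: Ef_ge0. Qed.

Lemma sum_q n p q : (q < p)%N ->
  \sum_(s <- tups n p) Ef (take q s) * Ef (drop q.+1 s) =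
  n%:R * Isum n q * Isum n (p - q.+1).
Proof.
move=> qp.
have -> : tups n p = tups n (q + (1 + (p - q.+1))).
  by rewrite add1n subnSK // subnKC // ltnW.
under eq_bigr do rewrite -add1n -drop_drop.
rewrite (big_tups_split n q (1 + (p - q.+1)) Ef (fun t => Ef (drop 1 t))).
have E2 := big_tups_split n 1 (p - q.+1) (fun _ => 1) Ef.
rewrite /= big_tups1 mulr1 in E2.
have E3 : \sum_(v <- tups n (1 + (p - q.+1))) Ef (drop 1 v) =
          \sum_(v <- tups n (1 + (p - q.+1))) 1 * Ef (drop 1 v).
  by apply: eq_bigr => v _; rewrite mul1r.
rewrite E3 E2 /Isum.
by rewrite mulrCA mulrA.
Qed.

Lemma sum_rec n p (phi : nat -> R) : (0 < p)%N ->
  (forall s q, size s = p -> (q < p)%N ->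
     Ef s <= phi (nth 0%N s q) + Ef (take q s) * Ef (drop q.+1 s)) ->
  Isum n p <= \sum_(s <- tups n p) phi (maxs s) +
              \sum_(q < p) n%:R * Isum n q * Isum n (p - q.+1).
Proof.
move=> p0 hyp.
have step s : s \in tups n p ->
    Ef s <= phi (maxs s) + \sum_(q < p) Ef (take q s) * Ef (drop q.+1 s).
  rewrite mem_tups => /andP[/eqP sp _].
  have sne : s != [::] by rewrite -size_eq0 sp -lt0n.
  have mm := maxs_mem sne.
  have qp : (index (maxs s) s < p)%N by rewrite -sp index_mem.
  apply: le_trans (hyp s _ sp qp) _; rewrite nth_index //; apply: lerD => //.
  rewrite (bigD1 (Ordinal qp)) //= lerDl.
  by apply: sumr_ge0 => i _; rewrite mulr_ge0 // Ef_ge0.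
rewrite /Isum big_seq.
apply: le_trans (ler_sum _ (fun s hs => step s hs)) _.
rewrite -big_seq big_split /= lerD // exchange_big /=.
by rewrite le_eqVlt; apply/orP; left; apply/eqP/eq_bigr => q _; rewrite sum_q.
Qed.

End main.

End Mm.
Import Mm.

Module Fm.
Import Order.TTheory GRing.Theory Num.Theory.
Local Open Scope classical_set_scope.
Local Open Scope ring_scope.
Set Implicit Arguments. Unset Strict Implicit. Unset Printing Implicit Defensive.

Lemma theta_bound {R : realType} (Theta : nat -> R) p : (forall n, 0 <= Theta n) ->
  (\sum_(0 <= i <oo) ((i%:R ^+ p.-1 * Theta i)%:E) < +oo)%E ->
  exists C : R, 0 <= C /\ forall n q, (q <= p.-1)%N ->
    \sum_(0 <= m < n) Theta m * m.+1%:R ^+ q <= C.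
Proof.
move=> T0 hs.
set Sv := (\sum_(0 <= i <oo) _)%E in hs.
have Sv0 : (0 <= Sv)%E.
  by apply: nneseries_ge0 => i _ _; rewrite lee_fin mulr_ge0 // exprn_ge0.
have part n : \sum_(0 <= m < n) m%:R ^+ p.-1 * Theta m <= fine Sv.
  have := @nneseries_lim_ge R (fun i => (i%:R ^+ p.-1 * Theta i)%:E) xpredT 0%N n.
  rewrite sumEFin => H; rewrite -lee_fin fineK ?ge0_fin_numE //; apply: H.
  by move=> i _ _; rewrite lee_fin mulr_ge0 // exprn_ge0.
exists (2%:R ^+ p.-1 * fine Sv + Theta 0); split.
  by rewrite addr_ge0 // mulr_ge0 ?exprn_ge0 // fine_ge0.
move=> n q qp.
have tm m : Theta m * m.+1%:R ^+ q <=
    2%:R ^+ p.-1 * (m%:R ^+ p.-1 * Theta m) + Theta 0 * (m < 1)%N%:R.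
  case: m => [|m].
    rewrite (_ : (0.+1%:R : R) = 1) // expr1n mulr1.
    by rewrite lerDr mulr_ge0 ?exprn_ge0 // mulr_ge0 // exprn_ge0.
  rewrite /= mulr0 addr0 mulrA mulrC; apply: ler_wpM2r => //.
  apply: le_trans (ler_weXn2l _ qp) _; first by rewrite ler1n.
  rewrite -exprMn; apply: lerXn2r; rewrite ?nnegrE //.
  by rewrite -natrM ler_nat mul2n -addnn -addn1 leq_add2l.
apply: le_trans (ler_sum _ (fun m _ => tm m)) _.
rewrite big_split /= -mulr_sumr -mulr_sumr; apply: lerD.
  by apply: ler_wpM2l; [rewrite exprn_ge0 | exact: part].
by rewrite -[leRHS]mulr1; apply: ler_wpM2l => //; exact: (count_lt n 1).
Qed.


End Fm.
Import Fm.
Import Order.TTheory GRing.Theory Num.Theory.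
Local Open Scope classical_set_scope.
Local Open Scope ring_scope.

Theorem lemma6 (dT : measure_display) (T : measurableType dT) (R : realType)
  (P : probability T R) (d : nat) (X : nat -> T -> d.-tuple R)
  (G : set (d.-tuple R -> R)) (normG : (d.-tuple R -> R) -> R)
  (Theta : nat -> R) (r : R) (p : nat) :
  (forall f, G f -> measurable_fun [set: d.-tuple R] f) ->
  (forall f, G f -> 0 <= normG f) ->
  is_process X -> stationary P X ->
  multiple_mixing P X G normG Theta r ->
  (0 < p)%N ->
  (\sum_(0 <= i <oo) ((i%:R ^+ p.-1 * Theta i)%:E) < +oo)%E ->
  exists Kp : R, forall (n : nat) (f : d.-tuple R -> R),
    (0 < n)%N -> G f -> (forall x, `|f x| <= 1) -> Ex P (f \o X 0%N) = 0 ->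
    In_p P X f n p <=
      Kp * \sum_(1 <= i < (uphalf p).+1)
             (n%:R ^+ i.-1 * Lrnorm P r (f \o X 0%N) ^+ i * normG f ^+ i).
Proof.
move=> mG nG0 hX hS [r1 Th0 Thm Kex] p0 hser.
have [C [C0 hC]] := theta_bound Th0 hser.
have L0 f : 0 <= Lrnorm P r (f \o X 0%N) by rewrite /Lrnorm fine_ge0 // Lnorm_ge0.
have main : forall p', (p' <= p)%N -> exists K : R, 0 <= K /\
    forall n f, G f -> (forall x, `|f x| <= 1) -> Ex P (f \o X 0%N) = 0 ->
    forall q, (q <= p')%N ->
      Isum P X f n q <= K * Rs n (Lrnorm P r (f \o X 0%N)) (normG f) q.
  elim=> [|p' IH] hp'.
    exists 0; split => // n f Gf f1 E0 q; rewrite leqn0 => /eqP ->.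
    rewrite mul0r /Isum big_tups0 /Ef /=.
    have -> : prodX f X (pos [::]) 0 1 = f \o X 0%N.
      by apply/funext => w; rewrite /prodX big_nat1.
    by rewrite E0 normr0.
  have [K0 [K00 hK0]] := IH (ltnW hp').
  have [Km hKm] := Kex p'.+1 isT.
  set Kp := Num.max Km 0.
  have Kp0 : 0 <= Kp by rewrite le_max lexx orbT.
  exists (Num.max K0 (Kp * p'.+1%:R * C + p'.+1%:R * (K0 * K0 * ((p'.+1) ^ 2)%:R))).
  split; first by rewrite le_max K00.
  move=> n f Gf f1 E0 q; rewrite leq_eqVlt => /orP[/eqP -> {q}|]; last first.
    rewrite ltnS => qp; apply: le_trans (hK0 n f Gf f1 E0 q qp) _.
    by apply: ler_wpM2r; [exact: (Rs_ge0 _ (L0 f) (nG0 f Gf)) | rewrite le_max lexx].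
  set L := Lrnorm P r (f \o X 0%N); set N := normG f.
  have N0 : 0 <= N by exact: nG0.
  have Rs0 k : 0 <= Rs n L N k by exact: (Rs_ge0 _ (L0 f) N0).
  have LN0 : 0 <= L * N by apply: mulr_ge0 => //; exact: L0.
  have KLN0 : 0 <= Kp * (L * N) by exact: mulr_ge0.
  apply: le_trans (_ : _ <= (Kp * p'.+1%:R * C + p'.+1%:R * (K0 * K0 * ((p'.+1) ^ 2)%:R)) * Rs n L N p'.+1) _; last first.
    by apply: ler_wpM2r => //; rewrite le_max lexx orbT.
  have mf := mG f Gf.
  have rec := @sum_rec _ _ _ P _ X f n p'.+1 (fun m => Kp * (L * N) * Theta m) isT.
  apply: le_trans (rec _) _.
    move=> s q1 sp qp; apply: (Ef_split hX hS mf f1 (q := q1)); first by rewrite sp.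
    have := hKm f Gf f1 E0 (nth 0%N s) q1.+1; rewrite ltnS qp /= sp => /(_ isT) H.
    apply: le_trans H _; rewrite -/L -/N.
    rewrite -!mulrA; apply: ler_wpM2r; first by apply: mulr_ge0; [exact: L0 | apply: mulr_ge0].
    by rewrite le_max lexx.
  rewrite mulrDl; apply: lerD.
    rewrite -mulr_sumr.
    have LN := LN_le_Rs n (L0 f) N0 (ltn0Sn p').
    apply: le_trans (_ : _ <= Kp * (L * N) * (p'.+1%:R * C)) _.
      apply: ler_wpM2l; first exact: KLN0.
      apply: le_trans (theta_sum n p' Th0) _.
      apply: ler_wpM2l => //; apply: hC.
      by rewrite -ltnS prednK // (leq_trans _ hp').
    rewrite (_ : Kp * (L * N) * (p'.+1%:R * C) = Kp * p'.+1%:R * C * (L * N)); last by ring.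
    by apply: ler_wpM2l => //; rewrite !mulr_ge0.
  rewrite -mulrA; apply: le_trans (_ : _ <= \sum_(q1 < p'.+1) K0 * K0 * ((p'.+1) ^ 2)%:R * Rs n L N p'.+1) _.
    apply: ler_sum => q _.
    have q1 : (q <= p')%N by rewrite -ltnS.
    have q2 : (p'.+1 - q.+1 <= p')%N by rewrite subSS leq_subr.
    have h1 := hK0 n f Gf f1 E0 q q1.
    have h2 := hK0 n f Gf f1 E0 _ q2.
    apply: le_trans (_ : _ <= n%:R * (K0 * Rs n L N q) * (K0 * Rs n L N (p'.+1 - q.+1))) _.
      apply: ler_pM => //.
      - by rewrite mulr_ge0 // Isum_ge0.
      - exact: Isum_ge0.
      - by apply: ler_wpM2l.
    have := Rs_prod n (L0 f) N0 q (p'.+1 - q.+1).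
    rewrite subSS addnC subnK // -/L -/N => H.
    have -> : n%:R * (K0 * Rs n L N q) * (K0 * Rs n L N (p' - q)) =
              K0 * K0 * (n%:R * Rs n L N q * Rs n L N (p' - q)) by ring.
    rewrite -(mulrA (K0 * K0)); apply: ler_wpM2l; first by rewrite mulr_ge0.
    exact: H.
  by rewrite sumr_const card_ord -[X in X <= _]mulr_natl !mulrA.
have [K [K0 hK]] := main p (leqnn p).
exists K => n f n0 Gf f1 E0.
apply: le_trans (hK n f Gf f1 E0 p (leqnn p)).
rewrite /In_p /Isum -(sum_ffun_tups p n (Ef P X f)).
rewrite big_mkcond /=; apply: ler_sum => i _; case: ifP => _; last exact: Ef_ge0.
rewrite /Ef size_seq_of le_eqVlt; apply/orP; left; apply/eqP.
congr `|Ex P _|; apply: prodX_ext => j _.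
by rewrite /pos -sum_take_seq_of.
Qed.
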